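(* Let $n\ge 2$ and $M=S+L\in M(n,\mathbb R)$ with $S\in\mathcal S_{\neq}$ and $L\in so(n)$, and suppose that $S$ and $L$ do not share any $k$-dimensional real invariant subspace, for every $k=1,\dots,n-1$. For $x>0$ let $\Pi_x=x^{-M}x^{-M^*}$. Then $$\bigcap_{x>0}G(\Pi_x)=\{I,-I\}.$$
   Context: $\mathcal S(n,\mathbb R)$ denotes the real symmetric $n\times n$ matrices, and $\mathcal S_{\neq}\subseteq\mathcal S(n,\mathbb R)$ the symmetric matrices whose $n$ eigenvalues are pairwise distinct. $so(n)$ denotes the real skew-symmetric $n\times n$ matrices. For $x>0$, $x^{-M}=\exp(-M\log x)$. A real invariant subspace of a matrix $T\in M(n,\mathbb R)$ is a linear subspace $V\subseteq\mathbb R^n$ with $TV\subseteq V$. For a matrix $\Pi\in M(n,\mathbb R)$, $G(\Pi)=\{O\in O(n):O\Pi=\Pi O\}$, where $O(n)$ is the orthogonal group. No restriction on the eigenvalues of $M$ is imposed. *)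

(* Defs.v *)
(* real matrices are represented as functions nat -> nat -> R,
   only the entries with indices < n being relevant. *)
From Stdlib Require Import Reals Lra Lia List ClassicalEpsilon Factorial.
Open Scope R_scope.

Definition vec := nat -> R.
Definition mat := nat -> nat -> R.

Definition fsum (n : nat) (f : nat -> R) : R :=
  fold_right Rplus 0 (map f (seq 0 n)).

Definition mmul (n : nat) (A B : mat) : mat :=
  fun i j => fsum n (fun k => A i k * B k j).
Definition madd (A B : mat) : mat := fun i j => A i j + B i j.
Definition mscale (c : R) (A : mat) : mat := fun i j => c * A i j.
Definition mopp (A : mat) : mat := fun i j => - A i j.
Definition mtr (A : mat) : mat := fun i j => A j i.
Definition mid : mat := fun i j => if Nat.eqb i j then 1 else 0.
Definition mapply (n : nat) (A : mat) (v : vec) : vec :=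
  fun i => fsum n (fun k => A i k * v k).

Definition meq (n : nat) (A B : mat) : Prop :=
  forall i j, (i < n)%nat -> (j < n)%nat -> A i j = B i j.

Fixpoint mpow (n : nat) (A : mat) (m : nat) : mat :=
  match m with
  | O => mid
  | S m' => mmul n A (mpow n A m')
  end.

Definition is_mexp (n : nat) (A E : mat) : Prop :=
  forall i j, (i < n)%nat -> (j < n)%nat ->
    Un_cv (fun N => sum_f_R0 (fun m => mpow n A m i j / INR (fact m)) N) (E i j).

Definition mexp (n : nat) (A : mat) : mat :=
  epsilon (inhabits (fun _ _ => 0)) (is_mexp n A).

Definition mxpowneg (n : nat) (x : R) (M : mat) : mat :=
  mexp n (mscale (- ln x) M).

(* Pi_x = x^{-M} x^{-M^*}, with M^* the transpose (real matrices) *)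
Definition Pi (n : nat) (M : mat) (x : R) : mat :=
  mmul n (mxpowneg n x M) (mxpowneg n x (mtr M)).

Definition symmetric (n : nat) (A : mat) : Prop := meq n (mtr A) A.
Definition skew (n : nat) (A : mat) : Prop := meq n (mtr A) (mopp A).

Definition is_eigenvalue (n : nat) (A : mat) (lam : R) : Prop :=
  exists v : vec, (exists i, (i < n)%nat /\ v i <> 0) /\
    forall i, (i < n)%nat -> mapply n A v i = lam * v i.

Definition sym_distinct (n : nat) (S : mat) : Prop :=
  symmetric n S /\
  exists lam : nat -> R,
    (forall i j, (i < n)%nat -> (j < n)%nat -> i <> j -> lam i <> lam j) /\
    (forall i, (i < n)%nat -> is_eigenvalue n S (lam i)).

(* a k-dimensional subspace of R^n given by a basis b 0, ..., b (k-1) *)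
Definition lin_indep (n k : nat) (b : nat -> vec) : Prop :=
  forall c : nat -> R,
    (forall r, (r < n)%nat -> fsum k (fun l => c l * b l r) = 0) ->
    forall l, (l < k)%nat -> c l = 0.

Definition in_span (n k : nat) (b : nat -> vec) (v : vec) : Prop :=
  exists c : nat -> R, forall r, (r < n)%nat -> v r = fsum k (fun l => c l * b l r).

Definition invariant_span (n k : nat) (A : mat) (b : nat -> vec) : Prop :=
  forall l, (l < k)%nat -> in_span n k b (mapply n A (b l)).

Definition share_invariant (n k : nat) (A B : mat) : Prop :=
  exists b : nat -> vec, lin_indep n k b /\
    invariant_span n k A b /\ invariant_span n k B b.

Definition orthogonal (n : nat) (O : mat) : Prop := meq n (mmul n (mtr O) O) mid.

Definition inG (n : nat) (Pm O : mat) : Prop :=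
  orthogonal n O /\ meq n (mmul n O Pm) (mmul n Pm O).

(* Main.v *)
Require Import Defs.
From Stdlib Require Import Reals Lra Lia List Permutation ClassicalEpsilon Classical FunctionalExtensionality Factorial.
Open Scope R_scope.

Lemma fold_Rplus_acc (l : list R) a : fold_right Rplus a l = a + fold_right Rplus 0 l.
Proof. induction l; simpl; [ring|rewrite IHl; ring]. Qed.

Lemma fsum_0 f : fsum 0 f = 0.
Proof. reflexivity. Qed.

Lemma fsum_S n f : fsum (S n) f = fsum n f + f n.
Proof.
  unfold fsum. rewrite seq_S, map_app, fold_right_app. simpl.
  rewrite fold_Rplus_acc. ring.
Qed.

Lemma fsum_ext n f g : (forall k, (k < n)%nat -> f k = g k) -> fsum n f = fsum n g.
Proof.
  induction n; intros H; [reflexivity|].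
  rewrite !fsum_S, IHn, H; auto; intros; apply H; lia.
Qed.

Lemma fsum_plus n f g : fsum n (fun k => f k + g k) = fsum n f + fsum n g.
Proof. induction n; [rewrite ?fsum_0; simpl; ring|rewrite !fsum_S, IHn; ring]. Qed.

Lemma fsum_minus n f g : fsum n (fun k => f k - g k) = fsum n f - fsum n g.
Proof. induction n; [rewrite ?fsum_0; simpl; ring|rewrite !fsum_S, IHn; ring]. Qed.

Lemma fsum_scal n c f : fsum n (fun k => c * f k) = c * fsum n f.
Proof. induction n; [rewrite ?fsum_0; simpl; ring|rewrite !fsum_S, IHn; ring]. Qed.

Lemma fsum_scal_r n c f : fsum n (fun k => f k * c) = fsum n f * c.
Proof. induction n; [rewrite ?fsum_0; simpl; ring|rewrite !fsum_S, IHn; ring]. Qed.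

Lemma fsum_zero n : fsum n (fun _ => 0) = 0.
Proof. induction n; [reflexivity|rewrite fsum_S, IHn; ring]. Qed.

Lemma fsum_const n c : fsum n (fun _ => c) = INR n * c.
Proof. induction n; [rewrite ?fsum_0; simpl; ring|rewrite fsum_S, IHn, S_INR; ring]. Qed.

Lemma fsum_swap n m (f : nat -> nat -> R) :
  fsum n (fun i => fsum m (fun j => f i j)) = fsum m (fun j => fsum n (fun i => f i j)).
Proof.
  induction n.
  - rewrite fsum_0. symmetry. apply fsum_zero.
  - rewrite fsum_S, IHn, <- fsum_plus. apply fsum_ext. intros. rewrite fsum_S. ring.
Qed.

Lemma fsum_single n m f : (m < n)%nat -> (forall k, (k < n)%nat -> k <> m -> f k = 0) ->
  fsum n f = f m.
Proof.
  induction n; intros Hm H; [lia|].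
  rewrite fsum_S. destruct (Nat.eq_dec m n).
  - subst. rewrite (fsum_ext _ _ (fun _ => 0)), fsum_zero; [ring|].
    intros; apply H; lia.
  - rewrite IHn; [rewrite (H n); [ring|lia|auto]|lia|].
    intros; apply H; lia.
Qed.

Lemma fsum_le n f g : (forall k, (k < n)%nat -> f k <= g k) -> fsum n f <= fsum n g.
Proof.
  induction n; intros H; [rewrite !fsum_0; lra|].
  rewrite !fsum_S. assert (f n <= g n) by (apply H; lia).
  assert (fsum n f <= fsum n g) by (apply IHn; intros; apply H; lia). lra.
Qed.

Lemma fsum_abs n f : Rabs (fsum n f) <= fsum n (fun k => Rabs (f k)).
Proof.
  induction n; [rewrite !fsum_0, Rabs_R0; lra|].
  rewrite !fsum_S. eapply Rle_trans; [apply Rabs_triang|]. lra.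
Qed.

Lemma fsum_nonneg n f : (forall k, (k < n)%nat -> 0 <= f k) -> 0 <= fsum n f.
Proof. intros H. rewrite <- (fsum_zero n). apply fsum_le. auto. Qed.

Lemma fsum_ge_term n m f : (forall k, (k < n)%nat -> 0 <= f k) -> (m < n)%nat -> f m <= fsum n f.
Proof.
  induction n; intros H Hm; [lia|]. rewrite fsum_S.
  destruct (Nat.eq_dec m n).
  - subst. assert (0 <= fsum n f) by (apply fsum_nonneg; intros; apply H; lia). lra.
  - assert (f m <= fsum n f) by (apply IHn; [intros; apply H; lia|lia]).
    assert (0 <= f n) by (apply H; lia). lra.
Qed.

Lemma fold_perm (l l' : list R) : Permutation l l' -> fold_right Rplus 0 l = fold_right Rplus 0 l'.
Proof. induction 1; simpl; try lra. Qed.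

Definition swapf (p q l : nat) : nat := if Nat.eqb l p then q else if Nat.eqb l q then p else l.

Lemma swapf_inv p q l : swapf p q (swapf p q l) = l.
Proof.
  unfold swapf. destruct (Nat.eqb l p) eqn:E1; destruct (Nat.eqb l q) eqn:E2;
  repeat (match goal with |- context [Nat.eqb ?a ?b] => destruct (Nat.eqb a b) eqn:? end);
  rewrite ?Nat.eqb_eq, ?Nat.eqb_neq in *; lia.
Qed.

Lemma fsum_swapf k p q f : (p < k)%nat -> (q < k)%nat ->
  fsum k (fun l => f (swapf p q l)) = fsum k f.
Proof.
  intros Hp Hq. unfold fsum. rewrite <- (map_map (swapf p q) f).
  apply fold_perm. apply Permutation_map.
  apply NoDup_Permutation.
  - apply FinFun.Injective_map_NoDup; [|apply seq_NoDup].
    intros a b E. rewrite <- (swapf_inv p q a), <- (swapf_inv p q b), E. reflexivity.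
  - apply seq_NoDup.
  - intros x. rewrite in_map_iff, in_seq. split.
    + intros [y [<- Hy]]. rewrite in_seq in Hy. unfold swapf.
      destruct (Nat.eqb y p); destruct (Nat.eqb y q); lia.
    + intros Hx. exists (swapf p q x). rewrite swapf_inv. split; auto.
      rewrite in_seq. unfold swapf. destruct (Nat.eqb x p); destruct (Nat.eqb x q); lia.
Qed.

Lemma lin_dep : forall n k (b : nat -> vec), (n < k)%nat ->
  exists c : nat -> R, (exists l, (l < k)%nat /\ c l <> 0) /\
    forall r, (r < n)%nat -> fsum k (fun l => c l * b l r) = 0.
Proof.
  induction n; intros k b Hk.
  - exists (fun _ => 1). split; [exists 0%nat; split; [lia|lra]|]. intros; lia.
  - destruct (classic (exists p, (p < k)%nat /\ b p n <> 0)) as [[p [Hp Hbp]]|Hno].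
    + set (q := (k - 1)%nat).
      set (sg := swapf p q).
      set (b2 := fun l r => b (sg l) r - (b (sg l) n / b p n) * b p r).
      destruct (IHn q b2) as [c2 [[l0 [Hl0 Hc0]] Hs]]; [unfold q; lia|].
      set (c1 := fun l => if Nat.ltb l q then c2 l else - fsum q (fun l => c2 l * (b (sg l) n / b p n))).
      exists (fun l => c1 (sg l)). split.
      * exists (sg l0). split.
        -- unfold sg, swapf. destruct (Nat.eqb l0 p); destruct (Nat.eqb l0 q); unfold q in *; lia.
        -- unfold sg. rewrite swapf_inv. unfold c1. rewrite (proj2 (Nat.ltb_lt _ _) Hl0). auto.
      * intros r Hr.
        assert (E : fsum k (fun l => c1 (sg l) * b l r) = fsum k (fun l => c1 l * b (sg l) r)).
        { rewrite <- (fsum_swapf k p q (fun l => c1 l * b (sg l) r)); [|auto|unfold q; lia].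
          apply fsum_ext. intros. unfold sg. rewrite swapf_inv. reflexivity. }
        rewrite E. replace k with (S q) by (unfold q; lia). rewrite fsum_S.
        assert (Eq : sg q = p).
        { unfold sg, swapf. destruct (Nat.eqb q p) eqn:E1; [apply Nat.eqb_eq in E1; auto|].
          rewrite Nat.eqb_refl. auto. }
        rewrite Eq. unfold c1 at 2. rewrite Nat.ltb_irrefl.
        rewrite (fsum_ext q (fun l => c1 l * b (sg l) r) (fun l => c2 l * b (sg l) r)).
        2:{ intros l Hl. unfold c1. rewrite (proj2 (Nat.ltb_lt _ _) Hl). auto. }
        assert (H2 : fsum q (fun l => c2 l * b2 l r) = 0).
        { destruct (Nat.eq_dec r n).
          - subst r. rewrite (fsum_ext _ _ (fun _ => 0)); [apply fsum_zero|].
            intros l _. unfold b2. field. auto.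
          - apply Hs. lia. }
        unfold b2 in H2.
        rewrite (fsum_ext q _ (fun l => c2 l * b (sg l) r - (c2 l * (b (sg l) n / b p n)) * b p r)) in H2
          by (intros; ring).
        rewrite fsum_minus, fsum_scal_r in H2. lra.
    + destruct (IHn k b) as [c [Hc Hs]]; [lia|]. exists c. split; auto.
      intros r Hr. destruct (Nat.eq_dec r n).
      * subst r. rewrite (fsum_ext _ _ (fun _ => 0)); [apply fsum_zero|].
        intros l Hl. destruct (Req_dec (b l n) 0) as [E|E]; [rewrite E; ring|].
        exfalso. apply Hno. eauto.
      * apply Hs. lia.
Qed.

Definition dot (n : nat) (x y : vec) : R := fsum n (fun r => x r * y r).

Lemma dot_fsum n k x c (b : nat -> vec) :
  dot n x (fun r => fsum k (fun l => c l * b l r)) = fsum k (fun l => c l * dot n x (b l)).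
Proof.
  unfold dot. rewrite (fsum_ext n _ (fun r => fsum k (fun l => x r * (c l * b l r)))).
  2:{ intros. rewrite <- fsum_scal. reflexivity. }
  rewrite fsum_swap. apply fsum_ext. intros. rewrite <- fsum_scal. apply fsum_ext. intros. ring.
Qed.

Lemma dot_ext n x y x' y' : (forall r, (r < n)%nat -> x r = x' r) -> (forall r, (r < n)%nat -> y r = y' r) ->
  dot n x y = dot n x' y'.
Proof. intros H1 H2. unfold dot. apply fsum_ext. intros. rewrite H1, H2; auto. Qed.

Lemma dot_comm n x y : dot n x y = dot n y x.
Proof. unfold dot. apply fsum_ext. intros; ring. Qed.

Lemma dot_lin n a b x y z w :
  dot n (fun r => a * x r + y r) (fun r => b * z r + w r) =
  a * b * dot n x z + a * dot n x w + b * dot n y z + dot n y w.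
Proof.
  unfold dot. rewrite <- !fsum_scal, <- !fsum_plus. apply fsum_ext. intros; ring.
Qed.

Lemma dot_scal_l n a x y : dot n (fun r => a * x r) y = a * dot n x y.
Proof. unfold dot. rewrite <- fsum_scal. apply fsum_ext. intros; ring. Qed.
Lemma dot_scal_r n a x y : dot n x (fun r => a * y r) = a * dot n x y.
Proof. unfold dot. rewrite <- fsum_scal. apply fsum_ext. intros; ring. Qed.
Lemma dot_minus_r n x y z : dot n x (fun r => y r - z r) = dot n x y - dot n x z.
Proof. unfold dot. rewrite <- fsum_minus. apply fsum_ext. intros; ring. Qed.

Lemma dot_self_pos n x : (exists i, (i < n)%nat /\ x i <> 0) -> dot n x x > 0.
Proof.
  intros [i [Hi Hx]]. unfold dot.
  assert (x i * x i <= fsum n (fun r => x r * x r)).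
  { apply (fsum_ge_term n i (fun r => x r * x r)); auto. intros; nra. }
  assert (0 < x i * x i) by nra. lra.
Qed.

Section Orth.
Variable n : nat.
Variable v : nat -> vec.
Hypothesis Horth : forall i j, (i < n)%nat -> (j < n)%nat -> i <> j -> dot n (v i) (v j) = 0.
Hypothesis Hpos : forall i, (i < n)%nat -> dot n (v i) (v i) > 0.

Lemma orth_zero : forall w, (forall j, (j < n)%nat -> dot n (v j) w = 0) -> forall r, (r < n)%nat -> w r = 0.
Proof.
  intros w Hw.
  set (b := fun l => if Nat.ltb l n then v l else w).
  destruct (lin_dep n (S n) b) as [c [[l0 [Hl0 Hc0]] Hs]]; [lia|].
  assert (Hcm : forall m, (m < n)%nat -> c m = 0).
  { intros m Hm.
    assert (E : dot n (v m) (fun r => fsum (S n) (fun l => c l * b l r)) = 0).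
    { unfold dot. rewrite (fsum_ext _ _ (fun _ => 0)); [apply fsum_zero|]. intros. rewrite Hs; auto; ring. }
    rewrite dot_fsum, fsum_S in E. unfold b at 2 in E. rewrite Nat.ltb_irrefl, Hw in E by auto.
    rewrite (fsum_single n m) in E; auto.
    - unfold b in E. rewrite (proj2 (Nat.ltb_lt _ _) Hm) in E.
      specialize (Hpos m Hm). nra.
    - intros k Hk Hkm. unfold b. rewrite (proj2 (Nat.ltb_lt _ _) Hk). rewrite Horth; auto; ring. }
  assert (l0 = n) by (destruct (Nat.eq_dec l0 n); auto; exfalso; apply Hc0; apply Hcm; lia).
  subst l0.
  intros r Hr. specialize (Hs r Hr). rewrite fsum_S in Hs.
  rewrite (fsum_ext _ _ (fun _ => 0)) in Hs by (intros; rewrite Hcm; auto; ring).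
  rewrite fsum_zero in Hs. unfold b in Hs. rewrite Nat.ltb_irrefl in Hs. nra.
Qed.

Lemma orth_expand : forall w r, (r < n)%nat ->
  w r = fsum n (fun j => (dot n (v j) w / dot n (v j) (v j)) * v j r).
Proof.
  intros w r Hr. apply Rminus_diag_uniq.
  apply (orth_zero (fun r => w r - fsum n (fun j => (dot n (v j) w / dot n (v j) (v j)) * v j r))); auto.
  intros j Hj. rewrite dot_minus_r, dot_fsum.
  rewrite (fsum_single n j); auto.
  + specialize (Hpos j Hj). field. lra.
  + intros k Hk Hkj. rewrite (Horth j k); [ring|auto|auto|lia].
Qed.
End Orth.

Lemma mapply_ext n A w w' i : (forall r, (r < n)%nat -> w r = w' r) -> mapply n A w i = mapply n A w' i.
Proof. intros H. unfold mapply. apply fsum_ext. intros. rewrite H; auto. Qed.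

Lemma mapply_mmul n X Y w i : mapply n (mmul n X Y) w i = mapply n X (mapply n Y w) i.
Proof.
  unfold mapply, mmul.
  rewrite (fsum_ext n _ (fun k => fsum n (fun l => X i l * Y l k * w k))).
  2:{ intros. rewrite <- fsum_scal_r. reflexivity. }
  rewrite fsum_swap. apply fsum_ext. intros. rewrite <- fsum_scal. apply fsum_ext. intros. ring.
Qed.

Lemma dot_tr n x X y : dot n x (mapply n X y) = dot n (mapply n (mtr X) x) y.
Proof.
  unfold dot, mapply, mtr.
  rewrite (fsum_ext n (fun r => x r * fsum n (fun k => X r k * y k)) (fun r => fsum n (fun k => x r * X r k * y k))).
  2:{ intros. rewrite <- fsum_scal. apply fsum_ext. intros. ring. }
  rewrite fsum_swap. apply fsum_ext. intros. rewrite <- fsum_scal_r. apply fsum_ext. intros. ring.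
Qed.

Lemma mid_single n w i : (i < n)%nat -> fsum n (fun k => mid i k * w k) = w i.
Proof.
  intros Hi. rewrite (fsum_single n i); [unfold mid; rewrite Nat.eqb_refl; ring|auto|].
  intros k Hk Hki. unfold mid. destruct (Nat.eqb i k) eqn:E; [apply Nat.eqb_eq in E; lia|ring].
Qed.

Lemma mid_single_r n w j : (j < n)%nat -> fsum n (fun k => w k * mid k j) = w j.
Proof.
  intros Hi. rewrite (fsum_single n j); [unfold mid; rewrite Nat.eqb_refl; ring|auto|].
  intros k Hk Hki. unfold mid. destruct (Nat.eqb k j) eqn:E; [apply Nat.eqb_eq in E; lia|ring].
Qed.

Lemma mapply_mid n w i : (i < n)%nat -> mapply n mid w i = w i.
Proof. apply mid_single. Qed.

Lemma mapply_madd n X Y w i : mapply n (madd X Y) w i = mapply n X w i + mapply n Y w i.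
Proof. unfold mapply, madd. rewrite <- fsum_plus. apply fsum_ext. intros; ring. Qed.

Lemma mapply_mscale n c X w i : mapply n (mscale c X) w i = c * mapply n X w i.
Proof. unfold mapply, mscale. rewrite <- fsum_scal. apply fsum_ext. intros; ring. Qed.

Lemma mapply_mopp n X w i : mapply n (mopp X) w i = - mapply n X w i.
Proof. unfold mapply, mopp. rewrite (fsum_ext _ _ (fun k => (-1) * (X i k * w k))) by (intros; ring).
  rewrite fsum_scal. ring. Qed.

Lemma mapply_scal_vec n X a w i : mapply n X (fun r => a * w r) i = a * mapply n X w i.
Proof. unfold mapply. rewrite <- fsum_scal. apply fsum_ext. intros; ring. Qed.

Lemma mapply_meq n X Y w i : meq n X Y -> (i < n)%nat -> mapply n X w i = mapply n Y w i.
Proof. intros H Hi. unfold mapply. apply fsum_ext. intros. rewrite H; auto. Qed.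

Lemma mmul_mid_r n X i j : (j < n)%nat -> mmul n X mid i j = X i j.
Proof. intros. unfold mmul. apply mid_single_r; auto. Qed.
Lemma mmul_mid_l n X i j : (i < n)%nat -> mmul n mid X i j = X i j.
Proof. intros. unfold mmul. apply (mid_single n (fun k => X k j)); auto. Qed.

Definition Qm (n : nat) (M : mat) : mat :=
  madd (madd (mmul n mid (mscale (/2) (mmul n (mtr M) (mtr M)))) (mmul n (mopp M) (mopp (mtr M))))
       (mmul n (mscale (/2) (mmul n M M)) mid).

Lemma Qm_apply n M y r : (r < n)%nat ->
  mapply n (Qm n M) y r = /2 * mapply n (mtr M) (mapply n (mtr M) y) r
     + mapply n M (mapply n (mtr M) y) r + /2 * mapply n M (mapply n M y) r.
Proof.
  intros Hr. unfold Qm. rewrite !mapply_madd, !mapply_mmul.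
  rewrite mapply_mid by auto. rewrite mapply_mscale, mapply_mmul, mapply_mopp.
  rewrite (mapply_ext n M (mapply n (mopp (mtr M)) y) (fun k => (-1) * mapply n (mtr M) y k)).
  2:{ intros. rewrite mapply_mopp. ring. }
  rewrite mapply_scal_vec, mapply_mscale, mapply_mmul.
  rewrite (mapply_ext n M (mapply n M (mapply n mid y)) (mapply n M y)).
  2:{ intros. apply mapply_ext. intros. apply mapply_mid; auto. }
  ring.
Qed.

Lemma dot_scal_r_gen n A a x y : dot n x (mapply n A (fun r => a * y r)) = a * dot n x (mapply n A y).
Proof. rewrite <- dot_scal_r. apply dot_ext; auto. intros. apply mapply_scal_vec. Qed.

Section LA.
Variable n : nat.
Variables S L O : mat.
Hypothesis Hn : (2 <= n)%nat.
Hypothesis HS : sym_distinct n S.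
Hypothesis HL : skew n L.
Hypothesis Hno : forall k, (1 <= k)%nat -> (k <= n - 1)%nat -> ~ share_invariant n k S L.
Hypothesis HO : orthogonal n O.
Hypothesis HOS : meq n (mmul n O S) (mmul n S O).
Hypothesis HOQ : meq n (mmul n O (Qm n (madd S L))) (mmul n (Qm n (madd S L)) O).

Definition eigv (A : mat) (a : R) (x : vec) : Prop := forall r, (r < n)%nat -> mapply n A x r = a * x r.

Lemma Ssym_apply x r : (r < n)%nat -> mapply n (mtr S) x r = mapply n S x r.
Proof. intros. unfold mapply. apply fsum_ext. intros. destruct HS as [Hs _]. rewrite (Hs r k); auto. Qed.

Lemma Lskew_apply x r : (r < n)%nat -> mapply n (mtr L) x r = - mapply n L x r.
Proof. intros. rewrite <- mapply_mopp. unfold mapply. apply fsum_ext. intros. rewrite (HL r k); auto. Qed.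

Lemma sym_dot x y : dot n x (mapply n S y) = dot n (mapply n S x) y.
Proof. rewrite dot_tr. apply dot_ext; auto. intros; apply Ssym_apply; auto. Qed.

Lemma skew_dot x y : dot n (mapply n L x) y = - dot n x (mapply n L y).
Proof.
  rewrite dot_comm, dot_tr.
  rewrite (dot_ext n (mapply n (mtr L) y) x (fun r => -1 * mapply n L y r) x).
  - rewrite dot_scal_l, dot_comm. ring.
  - intros; rewrite Lskew_apply; auto; ring.
  - auto.
Qed.

Lemma eig_orth x y a b : eigv S a x -> eigv S b y -> a <> b -> dot n x y = 0.
Proof.
  intros Hx Hy Hab.
  assert (E1 : dot n x (mapply n S y) = b * dot n x y).
  { rewrite <- dot_scal_r. apply dot_ext; auto. }
  assert (E2 : dot n (mapply n S x) y = a * dot n x y).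
  { rewrite <- dot_scal_l. apply dot_ext; auto. }
  rewrite sym_dot in E1. rewrite E1 in E2.
  assert ((b - a) * dot n x y = 0) by lra.
  apply Rmult_integral in H as [H|H]; auto. lra.
Qed.

Lemma M_apply y r : (r < n)%nat -> mapply n (madd S L) y r = mapply n S y r + mapply n L y r.
Proof. intros. apply mapply_madd. Qed.

Lemma Mt_apply y r : (r < n)%nat -> mapply n (mtr (madd S L)) y r = mapply n S y r - mapply n L y r.
Proof.
  intros Hr. unfold mapply. rewrite <- fsum_minus. apply fsum_ext. intros k Hk.
  unfold mtr, madd. destruct HS as [Hs _]. pose proof (Hs k r Hk Hr) as E1. pose proof (HL k r Hk Hr) as E2.
  unfold mtr, mopp in E1, E2. rewrite E1, E2; ring.
Qed.

Lemma Qdot x y a b : eigv S a x -> eigv S b y -> dot n x y = 0 ->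
  dot n x (mapply n (Qm n (madd S L)) y) = (b - a) * dot n x (mapply n L y).
Proof.
  intros Hx Hy Hxy.
  set (M := madd S L).
  rewrite (dot_ext n x (mapply n (Qm n M) y) x
     (fun r => /2 * mapply n (mtr M) (mapply n (mtr M) y) r
     + mapply n M (mapply n (mtr M) y) r + /2 * mapply n M (mapply n M y) r)); auto.
  2:{ intros; apply Qm_apply; auto. }
  unfold dot. rewrite (fsum_ext n _ (fun r => /2 * (x r * mapply n (mtr M) (mapply n (mtr M) y) r)
     + (x r * mapply n M (mapply n (mtr M) y) r) + /2 * (x r * mapply n M (mapply n M y) r))) by (intros; ring).
  rewrite !fsum_plus, !fsum_scal. fold (dot n x (mapply n (mtr M) (mapply n (mtr M) y))).
  fold (dot n x (mapply n M (mapply n (mtr M) y))). fold (dot n x (mapply n M (mapply n M y))).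
  rewrite (dot_tr n x (mtr M) (mapply n (mtr M) y)), (dot_tr n x M (mapply n (mtr M) y)), (dot_tr n x M (mapply n M y)).
  change (mtr (mtr M)) with M. fold (dot n x (mapply n L y)).
  set (lx := mapply n L x). set (ly := mapply n L y).
  assert (EMx : forall r, (r < n)%nat -> mapply n M x r = a * x r + 1 * lx r).
  { intros. unfold M. rewrite M_apply, Hx; auto. unfold lx; ring. }
  assert (EMtx : forall r, (r < n)%nat -> mapply n (mtr M) x r = a * x r + (-1) * lx r).
  { intros. unfold M. rewrite Mt_apply, Hx; auto. unfold lx; ring. }
  assert (EMy : forall r, (r < n)%nat -> mapply n M y r = b * y r + 1 * ly r).
  { intros. unfold M. rewrite M_apply, Hy; auto. unfold ly; ring. }
  assert (EMty : forall r, (r < n)%nat -> mapply n (mtr M) y r = b * y r + (-1) * ly r).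
  { intros. unfold M. rewrite Mt_apply, Hy; auto. unfold ly; ring. }
  rewrite (dot_ext n _ _ _ _ EMx EMty), (dot_ext n _ _ _ _ EMtx EMty), (dot_ext n _ _ _ _ EMtx EMy).
  assert (Hgen : forall a0 c0 b0 d0, dot n (fun r => a0 * x r + c0 * lx r) (fun r => b0 * y r + d0 * ly r)
     = a0 * b0 * dot n x y + a0 * d0 * dot n x ly + c0 * b0 * dot n lx y + c0 * d0 * dot n lx ly).
  { intros. unfold dot. rewrite <- !fsum_scal, <- !fsum_plus. apply fsum_ext. intros; ring. }
  rewrite !Hgen. unfold lx. rewrite (skew_dot x y). fold ly. rewrite Hxy. field.
Qed.

Variable lam : nat -> R.
Variable v : nat -> vec.
Hypothesis Hdist : forall i j, (i < n)%nat -> (j < n)%nat -> i <> j -> lam i <> lam j.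
Hypothesis Hvnz : forall i, (i < n)%nat -> exists r, (r < n)%nat /\ v i r <> 0.
Hypothesis Hveig : forall i, (i < n)%nat -> eigv S (lam i) (v i).

Lemma vorth i j : (i < n)%nat -> (j < n)%nat -> i <> j -> dot n (v i) (v j) = 0.
Proof. intros. apply (eig_orth _ _ (lam i) (lam j)); auto. Qed.

Lemma vpos i : (i < n)%nat -> dot n (v i) (v i) > 0.
Proof. intros. apply dot_self_pos. auto. Qed.

Lemma Ov_eig i : (i < n)%nat -> eigv S (lam i) (mapply n O (v i)).
Proof.
  intros Hi r Hr. rewrite <- mapply_mmul. rewrite <- (mapply_meq n (mmul n O S)) by (auto; intros a b Ha Hb; symmetry; apply HOS; auto).
  rewrite mapply_mmul. rewrite (mapply_ext n O _ (fun r => lam i * v i r)) by (intros; apply Hveig; auto).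
  apply mapply_scal_vec.
Qed.

Definition eps i := dot n (v i) (mapply n O (v i)) / dot n (v i) (v i).

Lemma Ov_eq i r : (i < n)%nat -> (r < n)%nat -> mapply n O (v i) r = eps i * v i r.
Proof.
  intros Hi Hr. apply Rminus_diag_uniq.
  apply (orth_zero n v vorth vpos (fun r => mapply n O (v i) r - eps i * v i r)); auto.
  intros j Hj. rewrite dot_minus_r, dot_scal_r. destruct (Nat.eq_dec j i).
  - subst. unfold eps. specialize (vpos i Hi). intros. field. lra.
  - rewrite (vorth j i), (eig_orth (v j) (mapply n O (v i)) (lam j) (lam i)); auto; try ring.
    apply Ov_eig; auto.
Qed.

Lemma OtO_apply w r : (r < n)%nat -> mapply n (mtr O) (mapply n O w) r = w r.
Proof.
  intros Hr. rewrite <- mapply_mmul. rewrite (mapply_meq n _ mid) by auto. apply mapply_mid; auto.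
Qed.

Lemma eps_sq i : (i < n)%nat -> eps i * eps i = 1.
Proof.
  intros Hi.
  assert (E1 : dot n (mapply n O (v i)) (mapply n O (v i)) = dot n (v i) (v i)).
  { rewrite dot_tr. apply dot_ext; auto. intros; apply OtO_apply; auto. }
  assert (E2 : dot n (mapply n O (v i)) (mapply n O (v i)) = eps i * eps i * dot n (v i) (v i)).
  { rewrite (dot_ext n _ _ (fun r => eps i * v i r) (fun r => eps i * v i r)) by (intros; apply Ov_eq; auto).
    rewrite dot_scal_l, dot_scal_r. ring. }
  specialize (vpos i Hi). intros.
  assert ((eps i * eps i - 1) * dot n (v i) (v i) = 0) by lra.
  apply Rmult_integral in H0 as [H0|H0]; lra.
Qed.

Lemma OTv i r : (i < n)%nat -> (r < n)%nat -> mapply n (mtr O) (v i) r = eps i * v i r.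
Proof.
  intros Hi Hr.
  assert (E : v i r = eps i * mapply n (mtr O) (v i) r).
  { rewrite <- (OtO_apply (v i) r Hr) at 1. rewrite <- mapply_scal_vec. apply mapply_ext. intros; apply Ov_eq; auto. }
  rewrite E. rewrite <- Rmult_assoc, eps_sq; auto. ring.
Qed.

Lemma eps_pm i : (i < n)%nat -> eps i = 1 \/ eps i = -1.
Proof.
  intros Hi. pose proof (eps_sq i Hi).
  assert ((eps i - 1) * (eps i + 1) = 0) by lra.
  apply Rmult_integral in H0 as [H0|H0]; [left|right]; lra.
Qed.

Lemma Lzero i j : (i < n)%nat -> (j < n)%nat -> eps i <> eps j -> dot n (v i) (mapply n L (v j)) = 0.
Proof.
  intros Hi Hj He.
  assert (Hij : i <> j) by (intros ->; auto).
  set (Q := Qm n (madd S L)).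
  assert (A1 : dot n (v i) (mapply n (mmul n O Q) (v j)) = eps i * dot n (v i) (mapply n Q (v j))).
  { rewrite (dot_ext n _ _ (v i) (mapply n O (mapply n Q (v j)))) by (auto; intros; apply mapply_mmul).
    rewrite dot_tr, (dot_ext n _ _ (fun r => eps i * v i r) (mapply n Q (v j))) by (auto; intros; apply OTv; auto).
    apply dot_scal_l. }
  assert (A2 : dot n (v i) (mapply n (mmul n Q O) (v j)) = eps j * dot n (v i) (mapply n Q (v j))).
  { rewrite (dot_ext n _ _ (v i) (mapply n Q (fun r => eps j * v j r))).
    - apply dot_scal_r_gen.
    - auto.
    - intros. rewrite mapply_mmul. apply mapply_ext. intros; apply Ov_eq; auto. }
  assert (A3 : dot n (v i) (mapply n (mmul n O Q) (v j)) = dot n (v i) (mapply n (mmul n Q O) (v j))).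
  { apply dot_ext; auto. intros. apply mapply_meq; auto. }
  rewrite A1, A2 in A3.
  assert (D0 : dot n (v i) (mapply n Q (v j)) = 0).
  { assert ((eps i - eps j) * dot n (v i) (mapply n Q (v j)) = 0) by lra.
    apply Rmult_integral in H as [H|H]; auto. lra. }
  unfold Q in D0. rewrite (Qdot (v i) (v j) (lam i) (lam j)) in D0; auto.
  2: apply vorth; auto.
  apply Rmult_integral in D0 as [D0|D0]; auto.
  exfalso. apply (Hdist j i); auto. lra.
Qed.

Lemma mapply_fsum A k c (b : nat -> vec) i :
  mapply n A (fun r => fsum k (fun l => c l * b l r)) i = fsum k (fun l => c l * mapply n A (b l) i).
Proof.
  unfold mapply. rewrite (fsum_ext n _ (fun r => fsum k (fun l => A i r * (c l * b l r)))).
  2:{ intros. rewrite <- fsum_scal. reflexivity. }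
  rewrite fsum_swap. apply fsum_ext. intros. rewrite <- fsum_scal. apply fsum_ext. intros. ring.
Qed.

Lemma all_same : (forall i j, (i < n)%nat -> (j < n)%nat -> eps i = eps j) -> meq n O mid \/ meq n O (mopp mid).
Proof.
  intros Hs.
  assert (Key : forall a b, (a < n)%nat -> (b < n)%nat -> O a b = eps 0 * mid a b).
  { intros a b Ha Hb.
    set (eb := fun r => mid r b).
    assert (E1 : O a b = mapply n O eb a) by (unfold mapply, eb; rewrite mid_single_r; auto).
    rewrite E1.
    rewrite (mapply_ext n O eb (fun r => fsum n (fun j => (dot n (v j) eb / dot n (v j) (v j)) * v j r)))
      by (intros; apply (orth_expand n v vorth vpos); auto).
    rewrite mapply_fsum.
    rewrite (fsum_ext n _ (fun j => eps 0 * ((dot n (v j) eb / dot n (v j) (v j)) * v j a))).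
    2:{ intros j Hj. rewrite Ov_eq, (Hs j 0%nat); auto; [ring|lia]. }
    rewrite fsum_scal. rewrite <- (orth_expand n v vorth vpos eb a Ha). reflexivity. }
  destruct (eps_pm 0%nat) as [E|E]; [lia| |]; rewrite E in Key; [left|right]; intros a b Ha Hb;
    rewrite Key; auto; unfold mopp; ring.
Qed.

Lemma fold_filter (p : nat -> bool) (g : nat -> R) (l : list nat) :
  (forall j, In j l -> p j = false -> g j = 0) ->
  fold_right Rplus 0 (map g l) = fold_right Rplus 0 (map g (filter p l)).
Proof.
  induction l as [|a l IH]; intros H; simpl; auto.
  destruct (p a) eqn:Ep; simpl; rewrite IH; auto; try (intros; apply H; simpl; auto).
  rewrite (H a); simpl; auto; ring.
Qed.

Lemma map_nth_seq' (l : list nat) (g : nat -> R) :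
  map g l = map (fun i => g (nth i l 0%nat)) (seq 0 (length l)).
Proof.
  induction l as [|a l IH]; simpl; auto. f_equal. rewrite IH, <- seq_shift, map_map. reflexivity.
Qed.

Lemma sum_filter (p : nat -> bool) (g : nat -> R) :
  (forall j, (j < n)%nat -> p j = false -> g j = 0) ->
  fsum n g = fsum (length (filter p (seq 0 n))) (fun l => g (nth l (filter p (seq 0 n)) 0%nat)).
Proof.
  intros H. unfold fsum. rewrite (fold_filter p).
  - rewrite map_nth_seq'. reflexivity.
  - intros j Hj. apply in_seq in Hj. apply H. lia.
Qed.

Lemma filter_length_lt (f : nat -> bool) (l : list nat) :
  (exists x, In x l /\ f x = false) -> (length (filter f l) < length l)%nat.
Proof.
  induction l as [|a l IH]; intros [x [Hx Hf]]; [destruct Hx|].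
  simpl. destruct Hx as [<-|Hx].
  - rewrite Hf. pose proof (filter_length_le f l). lia.
  - destruct (f a); simpl; [|pose proof (filter_length_le f l); lia].
    assert (length (filter f l) < length l)%nat by (apply IH; eauto). lia.
Qed.

Definition pb (i : nat) : bool := if Req_EM_T (eps i) 1 then true else false.

Lemma mixed : (exists i, (i < n)%nat /\ eps i = 1) -> (exists j, (j < n)%nat /\ eps j = -1) -> False.
Proof.
  intros [i0 [Hi0 Ei0]] [j0 [Hj0 Ej0]].
  set (lP := filter pb (seq 0 n)).
  set (k := length lP).
  set (b := fun l => v (nth l lP 0%nat)).
  assert (inP : forall l, (l < k)%nat -> (nth l lP 0%nat < n)%nat /\ eps (nth l lP 0%nat) = 1).
  { intros l Hl. pose proof (nth_In lP 0%nat Hl) as HI.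
    apply filter_In in HI as [HI Hp]. apply in_seq in HI. split; [lia|].
    unfold pb in Hp. destruct (Req_EM_T (eps (nth l lP 0%nat)) 1); auto; discriminate. }
  assert (nodup : forall l m, (l < k)%nat -> (m < k)%nat -> nth l lP 0%nat = nth m lP 0%nat -> l = m).
  { apply NoDup_nth. unfold lP. apply NoDup_filter, seq_NoDup. }
  apply (Hno k).
  - assert (In i0 lP).
    { unfold lP. apply filter_In. split; [apply in_seq; lia|]. unfold pb.
      destruct (Req_EM_T (eps i0) 1); auto. }
    unfold k. destruct lP; [destruct H|simpl; lia].
  - assert (k < n)%nat.
    { unfold k, lP. replace n with (length (seq 0 n)) at 2 by apply length_seq.
      apply filter_length_lt. exists j0. split; [apply in_seq; lia|]. unfold pb.
      destruct (Req_EM_T (eps j0) 1); auto. lra. }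
    lia.
  - exists b. split; [|split].
    + intros c Hc m Hm.
      assert (E : dot n (b m) (fun r => fsum k (fun l => c l * b l r)) = 0).
      { unfold dot. rewrite (fsum_ext _ _ (fun _ => 0)); [apply fsum_zero|]. intros. rewrite Hc; auto; ring. }
      rewrite dot_fsum in E. rewrite (fsum_single k m) in E; auto.
      * destruct (inP m Hm). pose proof (vpos _ H). unfold b in E. nra.
      * intros l Hl Hlm. unfold b. rewrite vorth; [ring|apply inP; auto|apply inP; auto|].
        intros E'. apply Hlm. symmetry. apply nodup; auto.
    + intros l Hl. exists (fun l' => if Nat.eqb l' l then lam (nth l lP 0%nat) else 0).
      intros r Hr. rewrite (fsum_single k l); auto.
      * rewrite Nat.eqb_refl. unfold b. apply Hveig; auto. apply inP; auto.
      * intros m Hm Hml. rewrite (proj2 (Nat.eqb_neq _ _) Hml). ring.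
    + intros l Hl. destruct (inP l Hl) as [Hil Eil].
      set (g := fun r j => (dot n (v j) (mapply n L (b l)) / dot n (v j) (v j)) * v j r).
      exists (fun l' => dot n (v (nth l' lP 0%nat)) (mapply n L (b l)) / dot n (v (nth l' lP 0%nat)) (v (nth l' lP 0%nat))).
      intros r Hr.
      rewrite (orth_expand n v vorth vpos (mapply n L (b l)) r Hr).
      transitivity (fsum n (g r)); [reflexivity|]. rewrite (sum_filter pb (g r)).
      * reflexivity.
      * intros j Hj Hp. unfold g. unfold b. rewrite Lzero; auto; [unfold Rdiv; ring|].
        unfold pb in Hp. destruct (Req_EM_T (eps j) 1); [discriminate|]. lra.
Qed.

Lemma LA_conclude : meq n O mid \/ meq n O (mopp mid).
Proof.
  apply all_same. intros i j Hi Hj.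
  destruct (eps_pm i Hi) as [Ei|Ei]; destruct (eps_pm j Hj) as [Ej|Ej]; try lra; exfalso; apply mixed; eauto.
Qed.
End LA.

Definition staylor (a : R -> R) (a0 a1 a2 : R) : Prop :=
  exists K t0, 0 < t0 /\ forall t, 0 < t <= t0 -> Rabs (a t - (a0 + a1 * t + a2 * t ^ 2)) <= K * t ^ 3.

Lemma staylor_get a a0 a1 a2 : staylor a a0 a1 a2 ->
  exists K t0, 0 <= K /\ 0 < t0 /\ t0 <= 1 /\
    forall t, 0 < t <= t0 -> Rabs (a t - (a0 + a1 * t + a2 * t ^ 2)) <= K * t ^ 3.
Proof.
  intros [K [t0 [Ht0 H]]]. exists K, (Rmin t0 1).
  assert (0 < Rmin t0 1) by (apply Rmin_pos; lra).
  assert (Rmin t0 1 <= t0) by apply Rmin_l. assert (Rmin t0 1 <= 1) by apply Rmin_r.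
  split; [|split; [auto|split; [auto|]]].
  - specialize (H t0 (conj Ht0 (Rle_refl _))).
    assert (0 < t0 ^ 3) by (apply pow_lt; auto).
    pose proof (Rabs_pos (a t0 - (a0 + a1 * t0 + a2 * t0 ^ 2))). nra.
  - intros t Ht. apply H. lra.
Qed.

Lemma staylor_ext a b a0 a1 a2 : (forall t, a t = b t) -> staylor a a0 a1 a2 -> staylor b a0 a1 a2.
Proof. intros E [K [t0 [H1 H2]]]. exists K, t0. split; auto. intros. rewrite <- E. auto. Qed.

Lemma staylor_coef a a0 a1 a2 b0 b1 b2 : staylor a a0 a1 a2 -> a0 = b0 -> a1 = b1 -> a2 = b2 -> staylor a b0 b1 b2.
Proof. intros H -> -> ->. auto. Qed.

Lemma staylor_const c : staylor (fun _ => c) c 0 0.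
Proof. exists 0, 1. split; [lra|]. intros t Ht. replace (c - (c + 0 * t + 0 * t ^ 2)) with 0 by ring.
  rewrite Rabs_R0. lra. Qed.

Lemma staylor_plus a b a0 a1 a2 b0 b1 b2 : staylor a a0 a1 a2 -> staylor b b0 b1 b2 ->
  staylor (fun t => a t + b t) (a0 + b0) (a1 + b1) (a2 + b2).
Proof.
  intros Ha Hb. apply staylor_get in Ha as [K1 [t1 [HK1 [Ht1 [Ht1' H1]]]]].
  apply staylor_get in Hb as [K2 [t2 [HK2 [Ht2 [Ht2' H2]]]]].
  exists (K1 + K2), (Rmin t1 t2). split; [apply Rmin_pos; lra|].
  intros t Ht. assert (t <= t1) by (eapply Rle_trans; [apply Ht|apply Rmin_l]).
  assert (t <= t2) by (eapply Rle_trans; [apply Ht|apply Rmin_r]).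
  specialize (H1 t (conj (proj1 Ht) H)). specialize (H2 t (conj (proj1 Ht) H0)).
  replace (a t + b t - (a0 + b0 + (a1 + b1) * t + (a2 + b2) * t ^ 2))
    with ((a t - (a0 + a1 * t + a2 * t ^ 2)) + (b t - (b0 + b1 * t + b2 * t ^ 2))) by ring.
  eapply Rle_trans; [apply Rabs_triang|]. lra.
Qed.

Lemma staylor_opp a a0 a1 a2 : staylor a a0 a1 a2 -> staylor (fun t => - a t) (- a0) (- a1) (- a2).
Proof.
  intros [K [t0 [H1 H2]]]. exists K, t0. split; auto. intros t Ht.
  replace (- a t - (- a0 + - a1 * t + - a2 * t ^ 2)) with (- (a t - (a0 + a1 * t + a2 * t ^ 2))) by ring.
  rewrite Rabs_Ropp. auto.
Qed.

Lemma Rabs5 x1 x2 x3 x4 x5 : Rabs (x1 + x2 + x3 + x4 + x5) <= Rabs x1 + Rabs x2 + Rabs x3 + Rabs x4 + Rabs x5.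
Proof.
  repeat (eapply Rle_trans; [apply Rabs_triang|apply Rplus_le_compat_r]). apply Rle_refl.
Qed.

Lemma staylor_mult a b a0 a1 a2 b0 b1 b2 : staylor a a0 a1 a2 -> staylor b b0 b1 b2 ->
  staylor (fun t => a t * b t) (a0 * b0) (a0 * b1 + a1 * b0) (a0 * b2 + a1 * b1 + a2 * b0).
Proof.
  intros Ha Hb. apply staylor_get in Ha as [K1 [t1 [HK1 [Ht1 [Ht1' H1]]]]].
  apply staylor_get in Hb as [K2 [t2 [HK2 [Ht2 [Ht2' H2]]]]].
  set (A := Rabs a0 + Rabs a1 + Rabs a2). set (B := Rabs b0 + Rabs b1 + Rabs b2).
  exists (Rabs a1 * Rabs b2 + Rabs a2 * Rabs b1 + Rabs a2 * Rabs b2 + A * K2 + K1 * B + K1 * K2), (Rmin t1 t2).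
  split; [apply Rmin_pos; lra|].
  intros t Ht. assert (t <= t1) by (eapply Rle_trans; [apply Ht|apply Rmin_l]).
  assert (t <= t2) by (eapply Rle_trans; [apply Ht|apply Rmin_r]).
  specialize (H1 t (conj (proj1 Ht) H)). specialize (H2 t (conj (proj1 Ht) H0)).
  destruct Ht as [Ht _].
  set (p := a0 + a1 * t + a2 * t ^ 2) in *. set (q := b0 + b1 * t + b2 * t ^ 2) in *.
  set (r := a t - p) in *. set (s := b t - q) in *.
  assert (Et : t <= 1) by lra.
  assert (t2p : 0 < t ^ 2) by (apply pow_lt; auto).
  assert (t3p : 0 < t ^ 3) by (apply pow_lt; auto).
  assert (t2le : t ^ 2 <= 1) by (simpl; nra).
  assert (t3le : t ^ 3 <= 1) by (simpl; nra).
  assert (t4le : t ^ 4 <= t ^ 3) by (simpl; nra).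
  assert (Hp : Rabs p <= A).
  { unfold p, A. pose proof (Rabs_triang (a0 + a1*t) (a2*t^2)). pose proof (Rabs_triang a0 (a1*t)).
    assert (Rabs (a1*t) <= Rabs a1) by (rewrite Rabs_mult, (Rabs_pos_eq t) by lra; pose proof (Rabs_pos a1); nra).
    assert (Rabs (a2*t^2) <= Rabs a2) by (rewrite Rabs_mult, (Rabs_pos_eq (t^2)) by lra; pose proof (Rabs_pos a2); nra).
    lra. }
  assert (Hq : Rabs q <= B).
  { unfold q, B. pose proof (Rabs_triang (b0 + b1*t) (b2*t^2)). pose proof (Rabs_triang b0 (b1*t)).
    assert (Rabs (b1*t) <= Rabs b1) by (rewrite Rabs_mult, (Rabs_pos_eq t) by lra; pose proof (Rabs_pos b1); nra).
    assert (Rabs (b2*t^2) <= Rabs b2) by (rewrite Rabs_mult, (Rabs_pos_eq (t^2)) by lra; pose proof (Rabs_pos b2); nra).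
    lra. }
  replace (a t * b t - (a0 * b0 + (a0 * b1 + a1 * b0) * t + (a0 * b2 + a1 * b1 + a2 * b0) * t ^ 2))
    with (t ^ 3 * (a1 * b2 + a2 * b1) + t ^ 4 * (a2 * b2) + p * s + r * q + r * s)
    by (unfold r, s, p, q; ring).
  eapply Rle_trans; [apply Rabs5|].
  assert (E1 : Rabs (t ^ 3 * (a1 * b2 + a2 * b1)) <= t ^ 3 * (Rabs a1 * Rabs b2 + Rabs a2 * Rabs b1)).
  { rewrite Rabs_mult, (Rabs_pos_eq (t^3)) by lra. apply Rmult_le_compat_l; [lra|].
    eapply Rle_trans; [apply Rabs_triang|]. rewrite !Rabs_mult. lra. }
  assert (E2 : Rabs (t ^ 4 * (a2 * b2)) <= t ^ 3 * (Rabs a2 * Rabs b2)).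
  { rewrite Rabs_mult, (Rabs_pos_eq (t^4)) by (apply pow_le; lra). rewrite Rabs_mult.
    pose proof (Rabs_pos a2). pose proof (Rabs_pos b2). apply Rmult_le_compat_r; [nra|lra]. }
  assert (E3 : Rabs (p * s) <= A * K2 * t ^ 3).
  { rewrite Rabs_mult. rewrite Rmult_assoc. apply Rmult_le_compat; auto using Rabs_pos. }
  assert (E4 : Rabs (r * q) <= K1 * B * t ^ 3).
  { rewrite Rabs_mult. replace (K1 * B * t ^ 3) with (K1 * t ^ 3 * B) by ring.
    apply Rmult_le_compat; auto using Rabs_pos. }
  assert (E5 : Rabs (r * s) <= K1 * K2 * t ^ 3).
  { rewrite Rabs_mult. assert (K1 * t ^ 3 <= K1) by nra.
    replace (K1 * K2 * t ^ 3) with (K1 * (K2 * t ^ 3)) by ring.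
    apply Rmult_le_compat; auto using Rabs_pos. lra. }
  nra.
Qed.

Lemma staylor_fsum m (F : nat -> R -> R) c0 c1 c2 :
  (forall k, (k < m)%nat -> staylor (F k) (c0 k) (c1 k) (c2 k)) ->
  staylor (fun t => fsum m (fun k => F k t)) (fsum m c0) (fsum m c1) (fsum m c2).
Proof.
  induction m; intros H.
  - rewrite !fsum_0. apply (staylor_ext (fun _ => 0)); [intros; rewrite fsum_0; auto|apply staylor_const].
  - rewrite !fsum_S. apply (staylor_ext (fun t => fsum m (fun k => F k t) + F m t)).
    + intros. rewrite fsum_S. auto.
    + apply staylor_plus; [apply IHm; intros; apply H; lia|apply H; lia].
Qed.

Lemma small_zero c C t0 : 0 < t0 -> (forall t, 0 < t <= t0 -> Rabs c <= t * C) -> c = 0.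
Proof.
  intros Ht0 H. destruct (Req_dec c 0) as [E|E]; auto. exfalso.
  assert (Hc : 0 < Rabs c) by (apply Rabs_pos_lt; auto).
  set (C' := Rabs C + 1).
  assert (HC' : 0 < C') by (unfold C'; pose proof (Rabs_pos C); lra).
  set (t := Rmin t0 (Rabs c / C')).
  assert (Htp : 0 < t) by (apply Rmin_pos; auto; apply Rdiv_lt_0_compat; auto).
  assert (Ht1 : t <= t0) by apply Rmin_l.
  assert (Ht2 : t <= Rabs c / C') by apply Rmin_r.
  specialize (H t (conj Htp Ht1)).
  assert (t * C' <= Rabs c) by (apply (Rmult_le_compat_r C') in Ht2; [|lra]; unfold Rdiv in Ht2;
     rewrite Rmult_assoc, Rinv_l in Ht2 by lra; lra).
  assert (C <= Rabs C) by apply RRle_abs. unfold C' in *. nra.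
Qed.

Lemma staylor_unique a a0 a1 a2 : staylor a a0 a1 a2 -> (forall t, 0 < t -> a t = 0) ->
  a0 = 0 /\ a1 = 0 /\ a2 = 0.
Proof.
  intros Ha Hz. apply staylor_get in Ha as [K [t0 [HK [Ht0 [Ht0' H]]]]].
  assert (H' : forall t, 0 < t <= t0 -> Rabs (a0 + a1 * t + a2 * t ^ 2) <= K * t ^ 3).
  { intros t Ht. specialize (H t Ht). rewrite Hz in H by lra. rewrite <- Rabs_Ropp.
    replace (- (a0 + a1 * t + a2 * t ^ 2)) with (0 - (a0 + a1 * t + a2 * t ^ 2)) by ring. auto. }
  assert (A0 : a0 = 0).
  { apply (small_zero a0 (K + Rabs a1 + Rabs a2) t0 Ht0). intros t Ht. specialize (H' t Ht).
    pose proof (Rabs_triang (a0 + a1 * t + a2 * t ^ 2) (- (a1 * t) - a2 * t ^ 2)).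
    replace (a0 + a1 * t + a2 * t ^ 2 + (- (a1 * t) - a2 * t ^ 2)) with a0 in H0 by ring.
    pose proof (Rabs_triang (- (a1 * t)) (- (a2 * t ^ 2))).
    replace (- (a1 * t) + - (a2 * t ^ 2)) with (- (a1 * t) - a2 * t ^ 2) in H1 by ring.
    rewrite !Rabs_Ropp, !Rabs_mult, (Rabs_pos_eq t), (Rabs_pos_eq (t^2)) in H1 by (try apply pow_le; lra).
    assert (t ^ 2 <= t) by (simpl; nra). assert (t ^ 3 <= t) by (simpl; nra).
    pose proof (Rabs_pos a2). nra. }
  subst a0.
  assert (A1 : a1 = 0).
  { apply (small_zero a1 (K + Rabs a2) t0 Ht0). intros t Ht. specialize (H' t Ht).
    replace (0 + a1 * t + a2 * t ^ 2) with (t * (a1 + a2 * t)) in H' by ring.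
    rewrite Rabs_mult, (Rabs_pos_eq t) in H' by lra.
    assert (H2 : Rabs (a1 + a2 * t) <= K * t ^ 2).
    { replace (K * t ^ 3) with (t * (K * t ^ 2)) in H' by ring.
      apply Rmult_le_reg_l with t; lra. }
    pose proof (Rabs_triang (a1 + a2 * t) (- (a2 * t))).
    replace (a1 + a2 * t + - (a2 * t)) with a1 in H0 by ring.
    rewrite Rabs_Ropp, Rabs_mult, (Rabs_pos_eq t) in H0 by lra.
    assert (t ^ 2 <= t) by (simpl; nra). nra. }
  subst a1. split; auto. split; auto.
  apply (small_zero a2 K t0 Ht0). intros t Ht. specialize (H' t Ht).
  replace (0 + 0 * t + a2 * t ^ 2) with (t ^ 2 * a2) in H' by ring.
  rewrite Rabs_mult, (Rabs_pos_eq (t^2)) in H' by (apply pow_le; lra).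
  replace (K * t ^ 3) with (t ^ 2 * (t * K)) in H' by ring.
  apply Rmult_le_reg_l with (t ^ 2); [apply pow_lt; lra|lra].
Qed.

Definition mtaylor (n : nat) (f : R -> mat) (P0 P1 P2 : mat) : Prop :=
  forall i j, (i < n)%nat -> (j < n)%nat -> staylor (fun t => f t i j) (P0 i j) (P1 i j) (P2 i j).

Lemma mtaylor_mul n f g P0 P1 P2 Q0 Q1 Q2 : mtaylor n f P0 P1 P2 -> mtaylor n g Q0 Q1 Q2 ->
  mtaylor n (fun t => mmul n (f t) (g t)) (mmul n P0 Q0) (madd (mmul n P0 Q1) (mmul n P1 Q0))
    (madd (madd (mmul n P0 Q2) (mmul n P1 Q1)) (mmul n P2 Q0)).
Proof.
  intros Hf Hg i j Hi Hj. unfold mmul, madd.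
  apply (staylor_coef _ (fsum n (fun k => P0 i k * Q0 k j))
     (fsum n (fun k => P0 i k * Q1 k j + P1 i k * Q0 k j))
     (fsum n (fun k => P0 i k * Q2 k j + P1 i k * Q1 k j + P2 i k * Q0 k j))).
  - apply (staylor_fsum n (fun k t => f t i k * g t k j)). intros k Hk. apply staylor_mult; auto.
  - auto.
  - apply fsum_plus.
  - rewrite !fsum_plus. auto.
Qed.

Lemma mtaylor_const n C : mtaylor n (fun _ => C) C (fun _ _ => 0) (fun _ _ => 0).
Proof. intros i j _ _. apply staylor_const. Qed.

Lemma mtaylor_eq n f g P0 P1 P2 Q0 Q1 Q2 : mtaylor n f P0 P1 P2 -> mtaylor n g Q0 Q1 Q2 ->
  (forall t, 0 < t -> meq n (f t) (g t)) ->
  meq n P1 Q1 /\ meq n P2 Q2.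
Proof.
  intros Hf Hg He. split; intros i j Hi Hj;
  destruct (staylor_unique (fun t => f t i j + - g t i j) _ _ _
     (staylor_plus _ _ _ _ _ _ _ _ (Hf i j Hi Hj) (staylor_opp _ _ _ _ (Hg i j Hi Hj)))) as [E0 [E1 E2]];
  try (intros t Ht; rewrite He; auto; ring); lra.
Qed.

Lemma mpow_bound n A a : (0 <= a) -> (forall i j, (i < n)%nat -> (j < n)%nat -> Rabs (A i j) <= a) ->
  forall m i j, (i < n)%nat -> (j < n)%nat -> Rabs (mpow n A m i j) <= (INR n * a) ^ m.
Proof.
  intros Ha HA m. induction m; intros i j Hi Hj.
  - simpl. unfold mid. destruct (Nat.eqb i j); [rewrite Rabs_R1|rewrite Rabs_R0]; lra.
  - simpl. unfold mmul. eapply Rle_trans; [apply fsum_abs|].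
    eapply Rle_trans; [apply (fsum_le _ _ (fun _ => a * (INR n * a) ^ m))|].
    + intros k Hk. rewrite Rabs_mult. apply Rmult_le_compat; auto using Rabs_pos.
    + rewrite fsum_const. right. ring.
Qed.

Lemma Un_cv_ext s s' l : (forall N, s N = s' N) -> Un_cv s l -> Un_cv s' l.
Proof. intros E H eps He. destruct (H eps He) as [N HN]. exists N. intros. rewrite <- E. auto. Qed.

Lemma series_conv (u : nat -> R) y : 0 <= y <= 1/2 -> (forall m, Rabs (u m) <= y ^ m) ->
  exists l, Un_cv (fun N => sum_f_R0 u N) l.
Proof.
  intros Hy Hu.
  assert (G : Un_cv (fun N => sum_f_R0 (fun m => 1 * y ^ m) N) (/ (1 - y))).
  { pose proof (GP_infinite y) as H. unfold Pser, infinite_sum in H. unfold Un_cv. apply H.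
    rewrite Rabs_pos_eq; lra. }
  assert (G2 : {l | Un_cv (fun N => sum_f_R0 (fun m => 2 * y ^ m) N) l}).
  { exists (2 * / (1 - y)).
    apply (Un_cv_ext (fun N => 2 * sum_f_R0 (fun m => 1 * y ^ m) N)).
    - intros N. induction N; simpl; [ring|]. rewrite <- IHN. ring.
    - apply (CV_mult (fun _ => 2)); auto. intros e He. exists 0%nat. intros. unfold Rdist.
      replace (2 - 2) with 0 by ring. rewrite Rabs_R0. lra. }
  destruct (Rseries_CV_comp (fun m => u m + 1 * y ^ m) (fun m => 2 * y ^ m)) as [l1 H1].
  - intros m. specialize (Hu m). pose proof (Rle_abs (u m)). pose proof (Rle_abs (- u m)). rewrite Rabs_Ropp in H0. lra.
  - auto.
  - exists (l1 - / (1 - y)). apply (Un_cv_ext (fun N => sum_f_R0 (fun m => u m + 1 * y ^ m) N - sum_f_R0 (fun m => 1 * y ^ m) N)).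
    + intros N. rewrite <- minus_sum. apply sum_eq. intros; ring.
    + apply CV_minus; auto.
Qed.

Lemma lim_bound s l T B N0 : Un_cv s l -> (forall N, (N >= N0)%nat -> Rabs (s N - T) <= B) -> Rabs (l - T) <= B.
Proof.
  intros Hc Hb. destruct (Rle_dec (Rabs (l - T)) B) as [|Hn]; auto. exfalso.
  assert (He : Rabs (l - T) - B > 0) by lra.
  destruct (Hc _ He) as [N1 HN1].
  specialize (HN1 (max N0 N1) ltac:(lia)). specialize (Hb (max N0 N1) ltac:(lia)).
  unfold Rdist in HN1.
  pose proof (Rabs_triang (l - s (max N0 N1)) (s (max N0 N1) - T)).
  replace (l - s (max N0 N1) + (s (max N0 N1) - T)) with (l - T) in H by ring.
  rewrite <- Rabs_Ropp in HN1. replace (- (s (max N0 N1) - l)) with (l - s (max N0 N1)) in HN1 by ring.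
  lra.
Qed.

Lemma mexp_approx n A a : (0 < n)%nat -> 0 <= a ->
  (forall i j, (i < n)%nat -> (j < n)%nat -> Rabs (A i j) <= a) -> INR n * a <= 1/2 ->
  forall i j, (i < n)%nat -> (j < n)%nat ->
  Rabs (mexp n A i j - (mid i j + A i j + mmul n A A i j / 2)) <= 2 * (INR n * a) ^ 3.
Proof.
  intros Hn Ha HA Hy0.
  set (y := INR n * a).
  assert (Hy : 0 <= y <= 1/2) by (unfold y; split; auto; apply Rmult_le_pos; auto; apply pos_INR).
  set (u := fun i j m => mpow n A m i j / INR (fact m)).
  assert (Hu : forall i j m, (i < n)%nat -> (j < n)%nat -> Rabs (u i j m) <= y ^ m).
  { intros i j m Hi Hj. unfold u. unfold Rdiv. rewrite Rabs_mult.
    assert (HF : 1 <= INR (fact m)) by (apply (le_INR 1); apply lt_O_fact).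
    rewrite Rabs_inv, (Rabs_pos_eq (INR (fact m))) by lra.
    pose proof (mpow_bound n A a Ha HA m i j Hi Hj). fold y in H.
    assert (/ INR (fact m) <= 1) by (rewrite <- Rinv_1; apply Rinv_le_contravar; lra).
    assert (0 < / INR (fact m)) by (apply Rinv_0_lt_compat; lra).
    pose proof (Rabs_pos (mpow n A m i j)). nra. }
  assert (Hexp : is_mexp n A (mexp n A)).
  { unfold mexp. apply epsilon_spec.
    exists (fun i j => epsilon (inhabits 0) (fun l => Un_cv (fun N => sum_f_R0 (fun m => mpow n A m i j / INR (fact m)) N) l)).
    intros i j Hi Hj. apply epsilon_spec. apply (series_conv _ y Hy). intros m. apply (Hu i j m Hi Hj). }
  intros i j Hi Hj. specialize (Hexp i j Hi Hj).
  assert (ET : mid i j + A i j + mmul n A A i j / 2 = sum_f_R0 (u i j) 2).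
  { simpl. unfold u. simpl mpow. rewrite mmul_mid_r by auto.
    replace (mmul n A (mmul n A mid) i j) with (mmul n A A i j).
    - simpl. field.
    - unfold mmul. apply fsum_ext. intros k Hk. f_equal. symmetry. apply (mid_single_r n (fun l => A k l) j Hj). }
  rewrite ET. apply (lim_bound _ _ _ _ 2%nat Hexp).
  assert (Tail : forall K, Rabs (sum_f_R0 (u i j) (K + 2) - sum_f_R0 (u i j) 2) <= 2 * y ^ 3 - 2 * y ^ (K + 3)).
  { induction K.
    - simpl (0 + 2)%nat. simpl (0+3)%nat. replace (sum_f_R0 (u i j) 2 - sum_f_R0 (u i j) 2) with 0 by ring.
      rewrite Rabs_R0. lra.
    - replace (S K + 2)%nat with (S (K + 2)) by lia. rewrite tech5.
      replace (sum_f_R0 (u i j) (K + 2) + u i j (S (K + 2)) - sum_f_R0 (u i j) 2)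
        with ((sum_f_R0 (u i j) (K + 2) - sum_f_R0 (u i j) 2) + u i j (S (K + 2))) by ring.
      eapply Rle_trans; [apply Rabs_triang|].
      pose proof (Hu i j (S (K + 2)) Hi Hj).
      replace (S (K + 2)) with (K + 3)%nat in H by lia.
      replace (S K + 3)%nat with (S (K + 3)) by lia.
      assert (E : y ^ S (K + 3) = y * y ^ (K + 3)) by reflexivity.
      rewrite E. assert (0 <= y ^ (K + 3)) by (apply pow_le; lra). replace (S (K + 2)) with (K + 3)%nat by lia. nra. }
  intros N HN. replace N with ((N - 2) + 2)%nat by lia.
  eapply Rle_trans; [apply Tail|]. assert (0 <= y ^ (N - 2 + 3)) by (apply pow_le; lra). lra.
Qed.

Lemma mexp_taylor n M : (0 < n)%nat ->
  mtaylor n (fun t => mexp n (mscale (- t) M)) mid (mopp M) (mscale (/2) (mmul n M M)).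
Proof.
  intros Hn i j Hi Hj.
  set (m := fsum n (fun i => fsum n (fun j => Rabs (M i j)))).
  assert (Hm : forall i j, (i < n)%nat -> (j < n)%nat -> Rabs (M i j) <= m).
  { intros a b Ha Hb. unfold m.
    eapply Rle_trans; [|apply (fsum_ge_term n a (fun i => fsum n (fun j => Rabs (M i j))))]; auto.
    - apply (fsum_ge_term n b (fun j => Rabs (M a j))); auto. intros; apply Rabs_pos.
    - intros. apply fsum_nonneg. intros; apply Rabs_pos. }
  assert (Hm0 : 0 <= m) by (unfold m; apply fsum_nonneg; intros; apply fsum_nonneg; intros; apply Rabs_pos).
  assert (HN : 0 <= INR n) by apply pos_INR.
  exists (2 * (INR n * m) ^ 3), (/ (2 * (INR n * m + 1))).
  split; [apply Rinv_0_lt_compat; nra|].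
  intros t [Ht Ht0].
  assert (Hb : INR n * (t * m) <= 1/2).
  { assert (t * (2 * (INR n * m + 1)) <= 1).
    { apply (Rmult_le_compat_r (2 * (INR n * m + 1))) in Ht0; [|nra].
      rewrite Rinv_l in Ht0 by nra. auto. }
    nra. }
  pose proof (mexp_approx n (mscale (- t) M) (t * m) Hn ltac:(nra)) as HA.
  assert (Hbd : forall i j, (i < n)%nat -> (j < n)%nat -> Rabs (mscale (- t) M i j) <= t * m).
  { intros a b Ha Hb'. unfold mscale. rewrite Rabs_mult, Rabs_Ropp, (Rabs_pos_eq t) by lra.
    apply Rmult_le_compat_l; [lra|auto]. }
  specialize (HA Hbd Hb i j Hi Hj).
  assert (EA : mmul n (mscale (- t) M) (mscale (- t) M) i j = t ^ 2 * mmul n M M i j).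
  { unfold mmul, mscale. rewrite <- fsum_scal. apply fsum_ext. intros; ring. }
  rewrite EA in HA.
  replace (mid i j + mopp M i j * t + mscale (/ 2) (mmul n M M) i j * t ^ 2)
    with (mid i j + mscale (- t) M i j + t ^ 2 * mmul n M M i j / 2)
    by (unfold mopp, mscale; field).
  replace (2 * (INR n * m) ^ 3 * t ^ 3) with (2 * (INR n * (t * m)) ^ 3) by ring.
  auto.
Qed.

Lemma Pi_taylor n M : (0 < n)%nat ->
  mtaylor n (fun t => Pi n M (exp t)) (mmul n mid mid)
    (madd (mmul n mid (mopp (mtr M))) (mmul n (mopp M) mid)) (Qm n M).
Proof.
  intros Hn i j Hi Hj.
  apply (staylor_ext (fun t => mmul n (mexp n (mscale (- t) M)) (mexp n (mscale (- t) (mtr M))) i j)).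
  - intros t. unfold Pi, mxpowneg. rewrite ln_exp. reflexivity.
  - apply (mtaylor_mul n _ _ _ _ _ _ _ _ (mexp_taylor n M Hn) (mexp_taylor n (mtr M) Hn)); auto.
Qed.

Lemma mmul_Z_l n X a b : mmul n (fun _ _ => 0) X a b = 0.
Proof. unfold mmul. rewrite (fsum_ext _ _ (fun _ => 0)) by (intros; ring). apply fsum_zero. Qed.
Lemma mmul_Z_r n X a b : mmul n X (fun _ _ => 0) a b = 0.
Proof. unfold mmul. rewrite (fsum_ext _ _ (fun _ => 0)) by (intros; ring). apply fsum_zero. Qed.

Lemma scalar_inG n O s P : s * s = 1 -> (forall a b, (a < n)%nat -> (b < n)%nat -> O a b = s * mid a b) -> inG n P O.
Proof.
  intros Hs HO. split.
  - intros i j Hi Hj. unfold mmul, mtr.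
    rewrite (fsum_ext _ _ (fun k => (s * s) * (mid i k * mid k j))).
    2:{ intros k Hk. rewrite !HO; auto. unfold mid. destruct (Nat.eqb k i) eqn:E1; destruct (Nat.eqb i k) eqn:E2;
        rewrite ?Nat.eqb_eq, ?Nat.eqb_neq in *; try lia; ring. }
    rewrite fsum_scal, Hs, (mid_single n (fun k => mid k j)); auto. ring.
  - intros i j Hi Hj. unfold mmul.
    rewrite (fsum_ext _ _ (fun k => s * (mid i k * P k j))) by (intros; rewrite HO; auto; ring).
    rewrite (fsum_ext n (fun k => P i k * O k j) (fun k => s * (P i k * mid k j))) by (intros; rewrite HO; auto; ring).
    rewrite !fsum_scal, (mid_single n (fun k => P k j)), (mid_single_r n (fun k => P i k)); auto.
Qed.

Theorem proposition5p1 (n : nat) (S L : mat) :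
  (2 <= n)%nat ->
  sym_distinct n S ->
  skew n L ->
  (forall k, (1 <= k)%nat -> (k <= n - 1)%nat -> ~ share_invariant n k S L) ->
  forall O : mat,
    (forall x : R, 0 < x -> inG n (Pi n (madd S L) x) O) <->
    (meq n O mid \/ meq n O (mopp mid)).
Proof.
  intros Hn HS HL Hno O. split.
  - intros H.
    assert (Hn0 : (0 < n)%nat) by lia.
    assert (HO : orthogonal n O) by (apply (H 1); lra).
    set (M := madd S L).
    set (P1 := madd (mmul n mid (mopp (mtr M))) (mmul n (mopp M) mid)).
    destruct (mtaylor_eq n (fun t => mmul n O (Pi n M (exp t))) (fun t => mmul n (Pi n M (exp t)) O) _ _ _ _ _ _
      (mtaylor_mul n _ _ _ _ _ _ _ _ (mtaylor_const n O) (Pi_taylor n M Hn0))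
      (mtaylor_mul n _ _ _ _ _ _ _ _ (Pi_taylor n M Hn0) (mtaylor_const n O))) as [E1 E2].
    { intros t Ht. apply (H (exp t) (exp_pos t)). }
    destruct HS as [Hsym [lam [Hdist Heig]]] eqn:EHS.
    assert (HP1 : forall k l, (k < n)%nat -> (l < n)%nat -> P1 k l = -2 * S k l).
    { intros k l Hk Hl. unfold P1, madd. rewrite mmul_mid_l, mmul_mid_r by auto.
      pose proof (Hsym k l Hk Hl). pose proof (HL k l Hk Hl). unfold M, mopp, mtr, madd in *. lra. }
    assert (HOS : meq n (mmul n O S) (mmul n S O)).
    { intros a b Ha Hb. specialize (E1 a b Ha Hb).
      change (mmul n O P1 a b + mmul n (fun _ _ => 0) (mmul n mid mid) a b = mmul n (mmul n mid mid) (fun _ _ => 0) a b + mmul n P1 O a b) in E1.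
      rewrite mmul_Z_l, mmul_Z_r in E1.
      assert (mmul n O P1 a b = -2 * mmul n O S a b).
      { unfold mmul. rewrite <- fsum_scal. apply fsum_ext. intros. rewrite HP1; auto; ring. }
      assert (mmul n P1 O a b = -2 * mmul n S O a b).
      { unfold mmul. rewrite <- fsum_scal. apply fsum_ext. intros. rewrite HP1; auto; ring. }
      lra. }
    assert (HOQ : meq n (mmul n O (Qm n M)) (mmul n (Qm n M) O)).
    { intros a b Ha Hb. specialize (E2 a b Ha Hb).
      change (mmul n O (Qm n M) a b + mmul n (fun _ _ => 0) P1 a b + mmul n (fun _ _ => 0) (mmul n mid mid) a b = mmul n (mmul n mid mid) (fun _ _ => 0) a b + mmul n P1 (fun _ _ => 0) a b + mmul n (Qm n M) O a b) in E2.
      rewrite !mmul_Z_l, !mmul_Z_r in E2. lra. }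
    set (v := fun i => epsilon (inhabits (fun _ : nat => 0))
       (fun w => (exists r, (r < n)%nat /\ w r <> 0) /\ forall r, (r < n)%nat -> mapply n S w r = lam i * w r)).
    assert (Hv : forall i, (i < n)%nat -> (exists r, (r < n)%nat /\ v i r <> 0) /\ forall r, (r < n)%nat -> mapply n S (v i) r = lam i * v i r).
    { intros i Hi. unfold v. apply epsilon_spec. destruct (Heig i Hi) as [w Hw]. exists w. auto. }
    apply (LA_conclude n S L O Hn HS HL Hno HO HOS HOQ lam v Hdist).
    + intros i Hi. apply Hv; auto.
    + intros i Hi. exact (proj2 (Hv i Hi)).
  - intros [HO|HO] x Hx.
    + apply (scalar_inG n O 1); [ring|]. intros. rewrite HO; auto; ring.
    + apply (scalar_inG n O (-1)); [ring|]. intros. rewrite HO; auto. unfold mopp. ring.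
Qed.
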